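(* Let $\mathbb{F}$ be a field, $\sigma$ a field automorphism of $\mathbb{F}$ of finite order $m$, $\delta=0$, and $K=\{\beta\in\mathbb{F}:\sigma(\beta)=\beta\}$. A vector $(a_1,\dots,a_r)\in\mathbb{F}^r$ is a $(\sigma,\delta)$-multiplicity sequence if and only if either $a_1=\dots=a_r=0$, or $a_1\ne0$ and for each $i=1,\dots,r-1$ there is $\beta_i\in\mathbb{F}^*$ with $$a_{i+1}=\sigma(\beta_i)\beta_i^{-1}a_i\quad\text{and}\quad \mathrm{T}_{\mathbb{F}/K}(\beta_ia_i^{-1})\ne0.$$ In particular, for $a\ne0$, $(a,\dots,a)\in\mathbb{F}^r$ ($r\ge2$) is a $(\sigma,\delta)$-multiplicity sequence if and only if $\mathrm{T}_{\mathbb{F}/K}(a^{-1})\ne0$.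
   Context: $\mathbb{F}[x;\sigma,0]$ is the skew polynomial ring with $xa=\sigma(a)x$. $\mathrm{T}_{\mathbb{F}/K}(a)=\sum_{i=0}^{m-1}\sigma^i(a)$. For $\mathbf a=(a_1,\dots,a_r)$, $P_{\mathbf a}=(x-a_r)\cdots(x-a_1)$; $\mathbf a$ is a $(\sigma,\delta)$-multiplicity sequence if $a_1$ is the only $b\in\mathbb{F}$ such that $x-b$ divides $P_{\mathbf a}$ on the right. *)

(* Defs.v *)
From HB Require Import structures.
From mathcomp Require Import all_boot all_order all_algebra.
Set Implicit Arguments. Unset Strict Implicit. Unset Printing Implicit Defensive.
Import GRing.Theory.
Local Open Scope ring_scope.

(* Skew polynomial ring F[x; sigma, 0], elements represented by their
   (left) coefficient polynomial: p = \sum_i p`_i x^i, with x a = sigma(a) x.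
   Hence (c x^i)(d x^j) = c sigma^i(d) x^(i+j). *)
Definition skew_mul (F : fieldType) (s : {rmorphism F -> F}) (p q : {poly F})
  : {poly F} :=
  \sum_(i < size p) \sum_(j < size q)
     (p`_i * iter i s (q`_j)) *: 'X^(i + j).

Definition is_order (F : fieldType) (s : {rmorphism F -> F}) (m : nat) :=
  (0 < m)%N /\ (forall x, iter m s x = x) /\
  (forall k, (0 < k < m)%N -> exists x, iter k s x != x).

Definition trace (F : fieldType) (s : {rmorphism F -> F}) (m : nat) (a : F) : F :=
  \sum_(i < m) iter i s a.

(* P_a = (x - a_r) ... (x - a_1) for a = [:: a_1; ...; a_r] *)
Definition Pseq (F : fieldType) (s : {rmorphism F -> F}) (a : seq F) : {poly F} :=
  foldr (fun c acc => skew_mul s acc ('X - c%:P)) 1 a.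

Definition rdvd (F : fieldType) (s : {rmorphism F -> F}) (q p : {poly F}) :=
  exists r : {poly F}, p = skew_mul s r q.

Definition mult_seq (F : fieldType) (s : {rmorphism F -> F}) (a : seq F) :=
  forall b : F, rdvd s ('X - b%:P) (Pseq s a) <-> b = a`_0.

(* Main.v *)
Require Import Defs.
From HB Require Import structures.
From mathcomp Require Import all_boot all_order all_algebra.
From mathcomp Require Import ring.
From Stdlib Require Import Classical.
Import GRing.Theory.
Local Open Scope ring_scope.
Section S.
Variables (F : fieldType) (s : {rmorphism F -> F}).
Fixpoint sit (n : nat) : {rmorphism F -> F} :=
  match n with 0 => idfun | n'.+1 => (s \o sit n')%FUN end.
Lemma sitE n x : sit n x = iter n s x.
Proof. by elim: n => //= n ->. Qed.
Lemma sit0 x : sit 0 x = x. Proof. by []. Qed.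
Lemma sitS n x : sit n.+1 x = s (sit n x). Proof. by []. Qed.
Lemma sitD i j x : sit i (sit j x) = sit (i + j) x.
Proof. by rewrite !sitE iterD. Qed.

Definition N (i : nat) (b : F) : F := \prod_(j < i) sit j b.
Lemma N0 b : N 0 b = 1. Proof. by rewrite /N big_ord0. Qed.
Lemma NS i b : N i.+1 b = N i b * sit i b. Proof. by rewrite /N big_ord_recr. Qed.
Lemma ND i j b : N (i + j) b = N i b * sit i (N j b).
Proof.
rewrite /N big_split_ord /= rmorph_prod; congr (_ * _).
by apply: eq_bigr => k _; rewrite sitD.
Qed.

Definition lam (f : {poly F}) (b g : F) : F :=
  \sum_(i < size f) f`_i * sit i g * N i b.

Lemma lam_wide n (f : {poly F}) b g : (size f <= n)%N ->
  lam f b g = \sum_(i < n) f`_i * sit i g * N i b.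
Proof.
move=> le; rewrite /lam (big_ord_widen n (fun i => f`_i * sit i g * N i b)) //.
rewrite big_mkcond; apply: eq_bigr => i _; case: ltnP => // le_p_i.
by rewrite nth_default // !mul0r.
Qed.

Lemma lamD (f h : {poly F}) b g : lam (f + h) b g = lam f b g + lam h b g.
Proof.
set n := maxn (size f) (size h).
rewrite (@lam_wide n) ?(leq_trans (size_polyD _ _)) //.
rewrite (@lam_wide n f) ?leq_maxl // (@lam_wide n h) ?leq_maxr //.
by rewrite -big_split; apply: eq_bigr => i _; rewrite coefD !mulrDl.
Qed.
Lemma lam0 b g : lam 0 b g = 0.
Proof. by rewrite /lam size_poly0 big_ord0. Qed.
Lemma lamN (f : {poly F}) b g : lam (- f) b g = - lam f b g.
Proof.
rewrite /lam size_polyN -sumrN; apply: eq_bigr => i _.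
by rewrite coefN !mulNr.
Qed.
Lemma lamB (f h : {poly F}) b g : lam (f - h) b g = lam f b g - lam h b g.
Proof. by rewrite lamD lamN. Qed.
Lemma lam_sum (I : Type) (r : seq I) (P : pred I) (Fi : I -> {poly F}) b g :
  lam (\sum_(i <- r | P i) Fi i) b g = \sum_(i <- r | P i) lam (Fi i) b g.
Proof. by apply: (big_morph (fun f => lam f b g)) => [f h|]; [exact: lamD|exact: lam0]. Qed.

Lemma lamZX c k b g : lam (c *: 'X^k) b g = c * sit k g * N k b.
Proof.
rewrite (@lam_wide k.+1); last first.
  by apply: (leq_trans (size_scale_leq _ _)); rewrite size_polyXn.
rewrite big_ord_recr /= big1 ?add0r; last first.
  by move=> i _; rewrite coefZ coefXn (ltn_eqF (ltn_ord i)) mulr0 !mul0r.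
by rewrite coefZ coefXn eqxx mulr1.
Qed.

Lemma lam_argD (f : {poly F}) b g1 g2 : lam f b (g1 + g2) = lam f b g1 + lam f b g2.
Proof. by rewrite /lam -big_split; apply: eq_bigr => i _; rewrite rmorphD mulrDr mulrDl. Qed.
Lemma lam_arg0 (f : {poly F}) b : lam f b 0 = 0.
Proof. by rewrite /lam big1 // => i _; rewrite rmorph0 mulr0 mul0r. Qed.
Lemma lam_argN (f : {poly F}) b g : lam f b (- g) = - lam f b g.
Proof. by rewrite /lam -sumrN; apply: eq_bigr => i _; rewrite rmorphN mulrN mulNr. Qed.
Lemma lam_argB (f : {poly F}) b g1 g2 : lam f b (g1 - g2) = lam f b g1 - lam f b g2.
Proof. by rewrite lam_argD lam_argN. Qed.
Lemma sit_fix k i : s k = k -> sit i k = k.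
Proof. by move=> h; elim: i => //= i ->. Qed.
Lemma lam_argK (f : {poly F}) b k g : s k = k -> lam f b (k * g) = k * lam f b g.
Proof.
move=> hk; rewrite /lam mulr_sumr; apply: eq_bigr => i _.
by rewrite rmorphM sit_fix //; ring.
Qed.

Lemma skew_mul_wide n (f g : {poly F}) : (size f <= n)%N ->
  skew_mul s f g = \sum_(i < n) \sum_(j < size g)
     (f`_i * sit i (g`_j)) *: 'X^(i + j).
Proof.
move=> le; have -> : skew_mul s f g = \sum_(i < size f) \sum_(j < size g)
     (f`_i * sit i (g`_j)) *: 'X^(i + j).
  by apply: eq_bigr => i _; apply: eq_bigr => j _; rewrite sitE.
rewrite (big_ord_widen n (fun i : nat => \sum_(j < size g)
     (f`_i * sit i (g`_j)) *: 'X^(i + j))) //.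
rewrite big_mkcond; apply: eq_bigr => i _; case: ltnP => [_|le_p_i] //.
by rewrite big1 // => j _; rewrite nth_default // mul0r scale0r.
Qed.

Lemma lam_mul (f g : {poly F}) b x : lam (skew_mul s f g) b x = lam f b (lam g b x).
Proof.
rewrite (@skew_mul_wide (size f)) // lam_sum [in RHS]/lam.
apply: eq_bigr => i _; rewrite lam_sum rmorph_sum mulr_sumr mulr_suml.
apply: eq_bigr => j _; rewrite lamZX ND !rmorphM sitD; ring.
Qed.

Definition conj (b g : F) : F := s g * b / g.

Lemma N_conj i b g : g != 0 -> N i (conj b g) * g = sit i g * N i b.
Proof.
move=> g0; elim: i => [|i IH]; first by rewrite !N0 mulr1 mul1r.
have gi0 : sit i g != 0 by rewrite fmorph_eq0.
rewrite !NS mulrAC IH /conj !rmorphM fmorphV.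
have -> : sit i (s g) = s (sit i g) by rewrite (sitD i 1) addn1.
by field.
Qed.

Lemma lam_conj (f : {poly F}) b g : g != 0 -> lam f b g = lam f (conj b g) 1 * g.
Proof.
move=> g0; rewrite /lam mulr_suml; apply: eq_bigr => i _.
by rewrite rmorph1 mulr1 -(mulrA _ (N i _)) N_conj //; ring.
Qed.

Lemma lam_XB b c g : lam ('X - b%:P) c g = s g * c - b * g.
Proof.
rewrite /lam size_XsubC !big_ord_recr big_ord0 /= !coefB coefX coefC !eqxx /=.
rewrite coefX coefC /= N0 NS N0 sit0; ring.
Qed.

Lemma lam1 c g : lam 1 c g = g.
Proof. by rewrite /lam size_poly1 big_ord_recr big_ord0 /= coef1 N0 add0r mul1r mulr1. Qed.

Lemma skew_mulDl (f h g : {poly F}) :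
  skew_mul s (f + h) g = skew_mul s f g + skew_mul s h g.
Proof.
set n := maxn (size f) (size h).
rewrite (@skew_mul_wide n) ?(leq_trans (size_polyD _ _)) //.
rewrite (@skew_mul_wide n f) ?leq_maxl // (@skew_mul_wide n h) ?leq_maxr //.
rewrite -big_split; apply: eq_bigr => i _; rewrite -big_split; apply: eq_bigr => j _.
by rewrite coefD mulrDl scalerDl.
Qed.

Lemma skew_mul0l (g : {poly F}) : skew_mul s 0 g = 0.
Proof. by rewrite /skew_mul size_poly0 big_ord0. Qed.

Lemma skew_mul_ZXB c k b :
  skew_mul s (c *: 'X^k) ('X - b%:P) = c *: 'X^(k.+1) - (c * sit k b) *: 'X^k.
Proof.
rewrite (@skew_mul_wide k.+1); last first.
  by apply: (leq_trans (size_scale_leq _ _)); rewrite size_polyXn.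
rewrite big_ord_recr /= big1 ?add0r; last first.
  move=> i _; apply: big1 => j _.
  by rewrite coefZ coefXn (ltn_eqF (ltn_ord i)) mulr0 !mul0r scale0r.
rewrite size_XsubC !big_ord_recr big_ord0 /= !coefB coefX coefC !eqxx /=.
rewrite coefX coefC /= coefZ coefXn eqxx mulr1 sub0r subr0 rmorphN rmorph1 add0r.
by rewrite addn0 addn1 mulr1 mulrN scaleNr addrC.
Qed.

Lemma root_of_rdvd (r : {poly F}) b : lam (skew_mul s r ('X - b%:P)) b 1 = 0.
Proof. by rewrite lam_mul lam_XB rmorph1 mul1r mulr1 subrr lam_arg0. Qed.

Lemma rdvd_of_root (p : {poly F}) b : lam p b 1 = 0 ->
  exists r, p = skew_mul s r ('X - b%:P).
Proof.
move: {2}(size p) (leqnn (size p)) => n; elim: n p => [|n IH] p le H.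
  move: le; rewrite size_poly_leq0 => /eqP ->; exists 0.
  by rewrite skew_mul0l.
case: (ltnP (size p) n.+1) => [lt|ge]; first exact: IH.
have sp : size p = n.+1 by apply/eqP; rewrite eqn_leq le ge.
case: n IH le H ge sp => [|k] IH le H ge sp.
  exfalso; move: H; rewrite /lam sp big_ord_recr big_ord0 /= N0 ?sit0 ?rmorph1 !mulr1 add0r.
  have : p != 0 by rewrite -size_poly_eq0 sp.
  by rewrite -lead_coef_eq0 lead_coefE sp => /eqP.
set c := p`_k.+1; set t := c *: 'X^k.
set p' := p - skew_mul s t ('X - b%:P).
have sp' : (size p' <= k.+1)%N.
  apply/leq_sizeP => j hj; rewrite /p' /t coefB skew_mul_ZXB coefB !coefZ !coefXn.
  rewrite (gtn_eqF hj) mulr0 subr0.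
  have [->|ne] := eqVneq j k.+1; first by rewrite ?eqxx mulr1 subrr.
  rewrite mulr0 subr0 nth_default // sp.
  by rewrite ltn_neqAle eq_sym ne hj.
have hp' : lam p' b 1 = 0 by rewrite /p' lamB root_of_rdvd H subrr.
have [r' Hr'] := IH p' sp' hp'.
by exists (r' + t); rewrite skew_mulDl -Hr' /p' subrK.
Qed.

Lemma Pseq_cons a l : Pseq s (a :: l) = skew_mul s (Pseq s l) ('X - a%:P).
Proof. by []. Qed.

Lemma sit_s i x : sit i (s x) = sit i.+1 x.
Proof. by rewrite (sitD i 1) addn1. Qed.

Lemma cyc_shift n (f : nat -> F) : (0 < n)%N -> f n = f 0%N ->
  \sum_(i < n) f i.+1 = \sum_(i < n) f i.
Proof. by case: n => // n _ h; rewrite big_ord_recr big_ord_recl /= h addrC. Qed.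

Variable m : nat.
Hypothesis hm : is_order s m.

Lemma m_gt0 : (0 < m)%N. Proof. by case: hm. Qed.
Lemma sitm x : sit m x = x. Proof. by case: hm => _ [h _]; rewrite sitE h. Qed.
Lemma sit_dist i j : (i < j)%N -> (j < m)%N -> exists y, sit i y != sit j y.
Proof.
move=> ij jm; case: hm => _ [_ h].
have [x hx] : exists x, iter (j - i) s x != x.
  by apply: h; rewrite subn_gt0 ij /= (leq_ltn_trans (leq_subr _ _) jm).
exists x; apply: contra hx => /eqP e; apply/eqP.
apply: (fmorph_inj (sit i)); rewrite -sitE sitD subnKC ?e //; exact: ltnW.
Qed.

Definition sinv x := sit m.-1 x.
Lemma s_sinv x : s (sinv x) = x.
Proof. by rewrite /sinv -sitS prednK ?m_gt0 // sitm. Qed.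

Lemma dedekind n (e : nat -> F) : (n <= m)%N ->
  (forall x, \sum_(i < n) e i * sit i x = 0) -> forall i, (i < n)%N -> e i = 0.
Proof.
elim: n e => [|n IH] e hn H i hi; first by rewrite ltn0 in hi.
have Hlt : forall y i, (i < n)%N -> e i * (sit i y - sit n y) = 0.
  move=> y; apply: IH; first exact: ltnW.
  move=> x; have h1 := H (x * y); have h2 := H x.
  rewrite big_ord_recr /= in h1; rewrite big_ord_recr /= in h2.
  have : (\sum_(i < n) e i * sit i (x * y) + e n * sit n (x * y)) -
         sit n y * (\sum_(i < n) e i * sit i x + e n * sit n x) =
         \sum_(i < n) e i * (sit i y - sit n y) * sit i x.
    rewrite rmorphM mulrDr mulr_sumr opprD addrACA.
    have -> : e n * (sit n x * sit n y) - sit n y * (e n * sit n x) = 0 by ring.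
    by rewrite addr0 -sumrB; apply: eq_bigr => j _; rewrite rmorphM; ring.
  by rewrite h1 h2 mulr0 subr0 => <-.
have Hn : forall i, (i < n)%N -> e i = 0.
  move=> j hj; have [y hy] := sit_dist j n hj hn.
  by have /eqP := Hlt y j hj; rewrite mulf_eq0 subr_eq0 (negbTE hy) orbF => /eqP.
case: (ltnP i n) => [/Hn //|ge].
have -> : i = n by apply/eqP; rewrite eqn_leq ge andbT -ltnS.
have := H 1; rewrite big_ord_recr /= big1 ?add0r; last by move=> j _; rewrite Hn // mul0r.
by rewrite rmorph1 mulr1.
Qed.

Definition T x := \sum_(i < m) sit i x.
Lemma traceE x : trace s m x = T x.
Proof. by apply: eq_bigr => i _; rewrite sitE. Qed.

Lemma T_s x : T (s x) = T x.
Proof.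
rewrite /T -(@cyc_shift m (fun i => sit i x)) ?m_gt0 ?sitm //.
by apply: eq_bigr => i _; rewrite sit_s.
Qed.
Lemma s_T x : s (T x) = T x.
Proof.
rewrite /T rmorph_sum -(@cyc_shift m (fun i => sit i x)) ?m_gt0 ?sitm //.
Qed.
Lemma TD x y : T (x + y) = T x + T y.
Proof. by rewrite /T -big_split; apply: eq_bigr => i _; rewrite rmorphD. Qed.
Lemma TN x : T (- x) = - T x.
Proof. by rewrite /T -sumrN; apply: eq_bigr => i _; rewrite rmorphN. Qed.
Lemma TB x y : T (x - y) = T x - T y.
Proof. by rewrite TD TN. Qed.
Lemma TK k x : s k = k -> T (k * x) = k * T x.
Proof. by move=> hk; rewrite /T mulr_sumr; apply: eq_bigr => i _; rewrite rmorphM sit_fix. Qed.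
Lemma T_S x : T (s x - x) = 0.
Proof. by rewrite TB T_s subrr. Qed.

Lemma T_nz : exists w, T w != 0.
Proof.
apply: Classical_Prop.NNPP => nex.
have H : forall x, T x = 0.
  by move=> x; case: (eqVneq (T x) 0) => // hx; exfalso; apply: nex; exists x.
have H1 : forall x, \sum_(i < m) (fun _ => (1 : F)) i * sit i x = 0.
  by move=> x; rewrite -[RHS](H x) /T; apply: eq_bigr => i _; rewrite mul1r.
have /eqP := @dedekind m (fun _ => 1) (leqnn m) H1 0%N m_gt0.
by rewrite oner_eq0.
Qed.

Lemma hilbert90 x : T x = 0 -> exists u, s u - u = x.
Proof.
move=> Tx; have [w tw] := T_nz; set t := T w.
pose y i := \sum_(j < i) sit j x.
have sy : forall i, s (y i) = y i.+1 - x.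
  move=> i; rewrite /y rmorph_sum big_ord_recl sit0 [x + _]addrC addrK.
  by apply: eq_bigr => j _.
pose v := \sum_(i < m) y i * sit i w.
have sv : s v = v - x * t.
  rewrite /v rmorph_sum.
  have -> : \sum_(i < m) s (y i * sit i w) =
     \sum_(i < m) y i.+1 * sit i.+1 w - x * \sum_(i < m) sit i.+1 w.
    rewrite mulr_sumr -sumrB; apply: eq_bigr => i _.
    by rewrite rmorphM sy -sitS; ring.
  rewrite (@cyc_shift m (fun i => y i * sit i w)) ?m_gt0 //; last first.
    by rewrite /y big_ord0 mul0r -/(T x) Tx mul0r.
  by rewrite (@cyc_shift m (fun i => sit i w)) ?m_gt0 ?sitm.
exists (- v / t); rewrite rmorphM fmorphV rmorphN sv s_T -/t; by field.
Qed.

Fixpoint ee (a c z t : F) (i : nat) : F :=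
  if i is i'.+1 then (c * s (ee a c z t i') - t) / a else z.

Lemma ee_aff a c z t i : ee a c z t i = ee a c 1 0 i * sit i z + ee a c 0 t i.
Proof.
elim: i => [|i IH] /=; first by rewrite mul1r addr0.
by rewrite IH rmorphD rmorphM; ring.
Qed.

Lemma ee_sum a c z t w : a != 0 -> ee a c z t m = z ->
  c * s (\sum_(i < m) ee a c z t i * sit i w)
    - a * (\sum_(i < m) ee a c z t i * sit i w) = t * T w.
Proof.
move=> a0 hz; set e := ee a c z t.
have he : forall i, c * s (e i) = a * e i.+1 + t.
  by move=> i; rewrite /e /=; field.
rewrite rmorph_sum mulr_sumr.
have -> : \sum_(i < m) c * s (e i * sit i w) =
   a * \sum_(i < m) e i.+1 * sit i.+1 w + t * \sum_(i < m) sit i.+1 w.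
  rewrite !mulr_sumr -big_split; apply: eq_bigr => i _.
  by rewrite rmorphM mulrA he -sitS /= mulrDl mulrA.
rewrite (@cyc_shift m (fun i => e i * sit i w)) ?m_gt0; last by rewrite sitm /e hz.
rewrite (@cyc_shift m (fun i => sit i w)) ?m_gt0 ?sitm //.
  by rewrite /T mulr_sumr addrAC subrr add0r.
by [].
Qed.

Lemma conj_or_sol a c : a != 0 -> ~ (exists d, c * s d - a * d = 1) ->
  exists d, d != 0 /\ c * s d = a * d.
Proof.
move=> a0 nsol; set P := ee a c 1 0 m.
case: (eqVneq P 1) => hP.
  apply: NNPP => nex.
  have H : forall w, \sum_(i < m) ee a c 1 0 i * sit i w = 0.
    move=> w; set d := \sum_(i < m) _.
    case: (eqVneq d 0) => // hd; exfalso; apply: nex; exists d; split => //.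
    by apply/eqP; rewrite -subr_eq0; apply/eqP; rewrite (ee_sum _ _ _ _ w a0 hP) mul0r.
  have /eqP := dedekind m _ (leqnn m) H 0%N m_gt0.
  by rewrite /= oner_eq0.
exfalso; apply: nsol; set Q := ee a c 0 1 m; set z := Q / (1 - P).
have hP' : 1 - P != 0 by rewrite subr_eq0 eq_sym.
have hz : ee a c z 1 m = z by rewrite ee_aff sitm -/P -/Q /z; field.
have [w tw] := T_nz.
have := ee_sum _ _ _ _ w a0 hz; set d := \sum_(i < m) _ => hd.
exists (d / T w); rewrite rmorphM fmorphV s_T mulrA (mulrA a) -mulrBl hd mul1r.
exact: divff.
Qed.

Definition pair_ok a1 a2 := (a1 = 0 /\ a2 = 0) \/
  (a1 != 0 /\ exists2 beta, beta != 0 & a2 = s beta * beta^-1 * a1 /\ T (beta * a1^-1) != 0).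

Lemma s_neq0 x : x != 0 -> s x != 0.
Proof. by rewrite fmorph_eq0. Qed.

Lemma PairChar a1 c : pair_ok a1 c <-> ~ (exists d, c * s d - a1 * d = 1).
Proof.
case: (eqVneq a1 0) => [->|a0].
  split.
    case=> [[_ ->]|[]]; last by rewrite eqxx.
    by case=> d; rewrite !mul0r subr0 => /eqP; rewrite eq_sym oner_eq0.
  move=> nsol; left; split => //; case: (eqVneq c 0) => // c0; exfalso; apply: nsol.
  by exists (sinv c^-1); rewrite s_sinv mul0r subr0 divff.
split.
  case=> [[a00 _]|[_ [b b0 [hc hT]]]]; first by rewrite a00 eqxx in a0.
  case=> d hd; apply/negP: hT; rewrite negbK.
  have e : b * a1^-1 * (c * s d - a1 * d) = s (b * d) - b * d.
    rewrite hc rmorphM; field; rewrite a0 b0 //.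
  by rewrite hd mulr1 in e; rewrite e T_S.
move=> nsol; right; split => //.
have [d [d0 hd]] := conj_or_sol _ _ a0 nsol.
have sd0 := s_neq0 _ d0.
exists d^-1; first by rewrite invr_eq0.
split.
  rewrite fmorphV invrK; apply: (mulIf sd0); rewrite hd; field; rewrite sd0 //.
apply/negP => /eqP hT; have [u hu] := hilbert90 _ hT; apply: nsol.
exists (u * d); rewrite rmorphM mulrA mulrAC hd.
have -> : a1 * d * s u - a1 * (u * d) = a1 * d * (s u - u) by ring.
by rewrite hu; field; rewrite a0 d0.
Qed.

Definition Z l b := lam (Pseq s l) b 1 = 0.
Definition U l := forall b, Z l b -> b = l`_0.

Lemma Z_cons a l b : Z (a :: l) b <-> lam (Pseq s l) b (b - a) = 0.
Proof. by rewrite /Z Pseq_cons lam_mul lam_XB rmorph1 mul1r mulr1. Qed.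

Lemma Z_head a l : Z (a :: l) a.
Proof. by rewrite /Z Pseq_cons root_of_rdvd. Qed.

Lemma mult_seqE l : (0 < size l)%N -> mult_seq s l <-> U l.
Proof.
case: l => // a l _; split.
  move=> h b hb; apply/(h b); exact: rdvd_of_root.
move=> h b; split.
  by case=> r hr; apply: h; rewrite /Z hr root_of_rdvd.
by move=> ->; exists (Pseq s l).
Qed.

Lemma U_single a : U [:: a].
Proof.
by move=> b /Z_cons; rewrite /= lam1 => /eqP; rewrite subr_eq0 => /eqP.
Qed.

Lemma Croot a l c : Z l c -> (exists d, c * s d - a * d = 1) ->
  exists2 b, b != a & Z (a :: l) b.
Proof.
move=> hc [d hd].
have d0 : d != 0 by apply/eqP => d0; move: hd; rewrite d0 rmorph0 !mulr0 subr0 => /eqP; rewrite eq_sym oner_eq0.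
have sd0 := s_neq0 _ d0.
have di0 : d^-1 != 0 by rewrite invr_eq0.
exists (a + d^-1).
  by rewrite -subr_eq0 addrAC subrr add0r.
apply/Z_cons; rewrite addrAC subrr add0r lam_conj //.
have -> : conj (a + d^-1) d^-1 = c.
  rewrite /conj fmorphV; apply: (mulIf sd0); rewrite -[c * s d](subrK (a * d)) hd.
  by field; rewrite d0 sd0 oner_neq0.
by move: hc; rewrite /Z => ->; rewrite mul0r.
Qed.

Lemma L2 a1 a2 r : pair_ok a1 a2 -> U (a2 :: r) -> U (a1 :: a2 :: r).
Proof.
move=> hp hU b hb /=; case: (eqVneq b a1) => // ne.
have g0 : b - a1 != 0 by rewrite subr_eq0.
move/Z_cons: hb; rewrite lam_conj // => /eqP; rewrite mulf_eq0 (negbTE g0) orbF => /eqP h.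
have hc := hU _ h; rewrite /= in hc.
exfalso; apply/(PairChar a1 a2).1 => //; exists (b - a1)^-1.
have sg0 := s_neq0 _ g0.
rewrite -hc /conj fmorphV; field; by rewrite g0 -rmorphB sg0.
Qed.

Lemma pair_of_U a1 l c : U (a1 :: l) -> Z l c -> pair_ok a1 c.
Proof.
move=> hU hc; apply/PairChar => hsol.
have [b nb hb] := Croot _ _ _ hc hsol.
by move: nb; rewrite (hU _ hb) eqxx.
Qed.

Lemma L3 a1 a2 r : U (a1 :: a2 :: r) -> pair_ok a1 a2 /\ U (a2 :: r).
Proof.
move=> hU; have hp := pair_of_U _ _ _ hU (Z_head a2 r).
split => // c hc /=.
have hpc := pair_of_U _ _ _ hU hc.
apply: NNPP => nec.
case: hp hpc => [[a10 a20]|[a10 [b b0 [hb2 hTb]]]] [[a10' c0]|[a10' [b' b'0 [hbc hTb']]]].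
- by apply: nec; rewrite c0 a20.
- by rewrite a10 eqxx in a10'.
- by rewrite a10' eqxx in a10.
set Q := Pseq s (a2 :: r).
have lamb : lam Q a1 b = 0.
  rewrite lam_conj //; have -> : conj a1 b = a2 by rewrite hb2 /conj; ring.
  by rewrite (Z_head a2 r) mul0r.
have lamb' : lam Q a1 b' = 0.
  rewrite lam_conj //; have -> : conj a1 b' = c by rewrite hbc /conj; ring.
  by rewrite hc mul0r.
set k := T (b' * a1^-1); set k0 := T (b * a1^-1).
set v := k * b - k0 * b'.
have hv : lam Q a1 v = 0.
  by rewrite /v lam_argB !lam_argK ?s_T // lamb lamb' !mulr0 subrr.
have Tv : T (v * a1^-1) = 0.
  have -> : v * a1^-1 = k * (b * a1^-1) - k0 * (b' * a1^-1) by rewrite /v; ring.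
  by rewrite TB (TK k) ?s_T // (TK k0) ?s_T // -/k -/k0 mulrC subrr.
have v0 : v != 0.
  apply/negP => /eqP v0; apply: nec.
  have e : b' = k / k0 * b.
    apply: (mulfI hTb); move/eqP: v0; rewrite /v subr_eq0 => /eqP <-.
    by rewrite -/k0; field.
  have sq : s (k / k0) = k / k0 by rewrite rmorphM fmorphV !s_T.
  rewrite hbc hb2 e rmorphM sq; field; rewrite hTb hTb' b0 //.
have [u hu] := hilbert90 _ Tv.
have u0 : u != 0.
  by apply/eqP => u0; move/eqP: hu; rewrite u0 rmorph0 subrr eq_sym mulf_eq0 invr_eq0 (negbTE a10) orbF (negbTE v0).
have hb : Z (a1 :: a2 :: r) (conj a1 u).
  have h2 : lam (Pseq s (a1 :: a2 :: r)) a1 u = 0.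
    rewrite Pseq_cons lam_mul lam_XB -/Q.
    have -> : s u * a1 - a1 * u = v by rewrite -[v](mulfVK a10) -hu; ring.
    exact: hv.
  move/eqP: h2; rewrite lam_conj // mulf_eq0 (negbTE u0) orbF => /eqP.
  by [].
have := hU _ hb; rewrite /= /conj => e.
have su : s u = u.
  move: e => /(congr1 (fun x => x * u)); rewrite mulfVK // mulrC => /(mulfI a10).
  by [].
move/eqP: v0; apply; move: hu; rewrite su subrr => /esym /eqP.
by rewrite mulf_eq0 invr_eq0 (negbTE a10) orbF => /eqP.
Qed.

Fixpoint chain (a : F) (l : seq F) : Prop :=
  if l is b :: l' then pair_ok a b /\ chain b l' else True.

Lemma U_chain l a : U (a :: l) <-> chain a l.
Proof.
elim: l a => [|b l IH] a /=; first by split => // _; exact: U_single.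
split; first by move/L3 => [hp hU]; split=> //; exact/IH.
by case=> hp hc; apply: L2 => //; exact/IH.
Qed.

Definition RHS (a : seq F) := all (fun c => c == 0) a \/
  (a`_0 != 0 /\ forall i : nat, (i.+1 < size a)%N ->
     exists2 beta : F, beta != 0 &
       a`_i.+1 = s beta * beta^-1 * a`_i /\ trace s m (beta * (a`_i)^-1) != 0).

Lemma chain_RHS l a : chain a l <-> RHS (a :: l).
Proof.
elim: l a => [|b l IH] a.
  split => // _; case: (eqVneq a 0) => [->|a0]; first by left; rewrite /= eqxx.
  by right; split.
rewrite /= IH /RHS; split.
  case=> [[[a0 b0]|[a0 [be be0 [hb hT]]]] hr].
    left; rewrite /= a0 b0 eqxx /=.
    case: hr => [/andP [_ h]|[]]; last by rewrite b0 eqxx.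
    exact: h.
  have b0 : b != 0 by rewrite hb !mulf_neq0 ?invr_eq0 ?s_neq0.
  right; split => // -[|i] hi; first by exists be => //; rewrite traceE.
  case: hr => [/= /andP [hb0 _]|[_ H]]; first by rewrite hb0 in b0.
  exact: H.
case.
  move=> /= /andP [/eqP a0 /andP [/eqP b0 hl]]; split; first by left.
  by left; rewrite /= b0 eqxx.
case=> a0 H; have [be be0 [hb hT]] := H 0%N isT.
have b0 : b != 0 by rewrite /= in hb; rewrite hb !mulf_neq0 ?invr_eq0 ?s_neq0.
split; first by right; split => //; exists be => //; rewrite -traceE.
by right; split => // i hi; exact: (H i.+1).
Qed.

Lemma nseq_pair a k : chain a (nseq k.+1 a) <-> pair_ok a a.
Proof.
elim: k => [|k IH]; first by split => [[]|].
split => [[]|h] //; split => //; exact/IH.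
Qed.

Lemma pair_aa a : a != 0 -> (pair_ok a a <-> T a^-1 != 0).
Proof.
move=> a0; split.
  case=> [[a00 _]|[_ [be be0 [hb hT]]]]; first by rewrite a00 eqxx in a0.
  have e : s be * be^-1 = 1 by apply: (mulIf a0); rewrite mul1r -hb.
  have sb : s be = be by rewrite -[s be](mulfVK be0) e mul1r.
  by apply: contra hT => /eqP h; rewrite TK // h mulr0.
move=> hT; right; split => //; exists 1; first exact: oner_neq0.
by rewrite rmorph1 invr1 !mul1r.
Qed.

End S.

Theorem mainTheorem18 (F : fieldType) (s : {rmorphism F -> F}) (m : nat)
  (hm : is_order s m) :
  (forall a : seq F, (0 < size a)%N ->
     (mult_seq s a <->
        (all (fun c => c == 0) a \/
         (a`_0 != 0 /\
          forall i : nat, (i.+1 < size a)%N ->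
            exists2 beta : F, beta != 0 &
              a`_i.+1 = s beta * beta^-1 * a`_i /\
              trace s m (beta * (a`_i)^-1) != 0)))) /\
  (forall (a : F) (r : nat), a != 0 -> (2 <= r)%N ->
     (mult_seq s (nseq r a) <-> trace s m a^-1 != 0)).
Proof.
split.
  case=> // a l _; by rewrite mult_seqE // (@U_chain _ _ _ hm) chain_RHS /RHS.
move=> a [|[|r]] // a0 _.
by rewrite mult_seqE //= (@U_chain _ _ _ hm) nseq_pair pair_aa // traceE.
Qed.
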